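(* Let $\mathcal{K}=(\mathcal{R},\mathcal{T})$ be an ME-consistent $\mathcal{ALCP}$ knowledge base over $\mathcal{L}$, let $C,D$ be concepts, let $\phi\in\mathcal{L}$ be a consequence formula for $C\sqsubseteq D$ w.r.t. $\mathcal{T}$, let $\psi\in\mathcal{L}$ be a consequence formula for the strong non-subsumption of $C$ by $D$ w.r.t. $\mathcal{T}$, and let $\kappa\in\mathcal{L}$. Then $\mathcal{B}^{s}_{\mathcal{K}}(C\sqsubseteq D\mid\kappa)=P^{ME}_{\mathcal{R}}(\phi\mid\kappa)$ and $\mathcal{B}^{c}_{\mathcal{K}}(C\sqsubseteq D\mid\kappa)=1-P^{ME}_{\mathcal{R}}(\psi\mid\kappa)$.
   Context: $\mathcal{L}$ is a propositional language over a finite set of variables; $\mathrm{Int}(\mathcal{L})$ is the set of truth assignments. A probability distribution over $\mathcal{L}$ is $P:\mathrm{Int}(\mathcal{L})\to[0,1]$ summing to $1$, with $P(\phi)=\sum_{v\models\phi}P(v)$ and $P(\phi\mid\kappa)=P(\phi\wedge\kappa)/P(\kappa)$. A probabilistic constraint is $c_0+\sum_{i=1}^k c_i\,\mathsf{p}(\phi_i)\ge 0$ ($c_i\in\mathbb{R}$, $\phi_i\in\mathcal{L}$), satisfied by $P$ iff $c_0+\sum_ic_iP(\phi_i)\ge0$; $\mathrm{Mod}(\mathcal{R})$ is the set of distributions satisfying all constraints in $\mathcal{R}$; for consistent $\mathcal{R}$, $P^{ME}_{\mathcal{R}}$ is the unique maximizer in $\mathrm{Mod}(\mathcal{R})$ of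 $H(P)=-\sum_vP(v)\log P(v)$. Concepts: $C::=A\mid\neg C\mid C\sqcap C\mid\exists r.C$. An $\mathcal{L}$-GCI is $\langle C\sqsubseteq D:\kappa\rangle$, $\kappa\in\mathcal{L}$; an $\mathcal{L}$-TBox is a finite set of them; a KB is $\mathcal{K}=(\mathcal{R},\mathcal{T})$. A possible world $\mathcal{I}=(\Delta^{\mathcal{I}},\cdot^{\mathcal{I}},v^{\mathcal{I}})$ is a classical $\mathcal{ALC}$ interpretation together with $v^{\mathcal{I}}\in\mathrm{Int}(\mathcal{L})$; it models $\langle C\sqsubseteq D:\kappa\rangle$ iff $v^{\mathcal{I}}\not\models\kappa$ or $C^{\mathcal{I}}\subseteq D^{\mathcal{I}}$. For $w\in\mathrm{Int}(\mathcal{L})$, $\mathcal{T}_w=\{C\sqsubseteq D\mid\langle C\sqsubseteq D:\kappa\rangle\in\mathcal{T}, w\models\kappa\}$; $\mathcal{T}_w\models C\sqsubseteq D$ means $C^{\mathcal{I}}\subseteq D^{\mathcal{I}}$ in every classical interpretation satisfying all inclusions of $\mathcal{T}_w$; $C$ is strongly non-subsumed by $D$ w.r.t. $\mathcal{T}_w$ iff $C^{\mathcal{I}}\not\subseteq D^{\mathcal{I}}$ in every such interpretation. A formula $\phi$ is a consequence formula for $C\sqsubseteq D$ (resp. for strong non-subsumption of $C$ by $D$) w.r.t. $\mathcal{T}$ iff for every $w\in\mathrm{Int}(\mathcal{L})$: $w\models\phi$ iff $\mathcal{T}_w\models C\sqsubseteq D$ (resp. iff $C$ is strongly non-subsumed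 by $D$ w.r.t. $\mathcal{T}_w$). An $\mathcal{ALCP}$-interpretation $\mathcal{P}=(\mathfrak{I},P_{\mathfrak{I}})$ is a nonempty finite set of possible worlds with a probability distribution on it; $P^{\mathcal{P}}(v)=\sum_{\mathcal{I}\in\mathfrak{I},v^{\mathcal{I}}=v}P_{\mathfrak{I}}(\mathcal{I})$. $\mathcal{P}$ is an ME-$\mathcal{ALCP}$-model of $\mathcal{K}$ iff all its worlds model every GCI of $\mathcal{T}$ and $P^{\mathcal{P}}=P^{ME}_{\mathcal{R}}$; $\mathrm{Mod}_{ME}(\mathcal{K})$ is the set of these; $\mathcal{K}$ is ME-consistent iff it is nonempty. $\Pr_{\mathcal{P}}(C\sqsubseteq D\mid\kappa)=\big(\sum_{\mathcal{I}\in\mathfrak{I},v^{\mathcal{I}}\models\kappa,C^{\mathcal{I}}\subseteq D^{\mathcal{I}}}P_{\mathfrak{I}}(\mathcal{I})\big)/\big(\sum_{\mathcal{I}\in\mathfrak{I},v^{\mathcal{I}}\models\kappa}P_{\mathfrak{I}}(\mathcal{I})\big)$. $\mathcal{B}^{s}_{\mathcal{K}}(C\sqsubseteq D\mid\kappa)$ and $\mathcal{B}^{c}_{\mathcal{K}}(C\sqsubseteq D\mid\kappa)$ are the infimum and supremum of $\Pr_{\mathcal{P}}(C\sqsubseteq D\mid\kappa)$ over $\mathcal{P}\in\mathrm{Mod}_{ME}(\mathcal{K})$. *)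

(* Defs.v *)
From HB Require Import structures.
From mathcomp Require Import all_boot all_order all_algebra.
From mathcomp Require Import classical_sets boolp reals exp.
From Stdlib Require List.
Set Implicit Arguments. Unset Strict Implicit. Unset Printing Implicit Defensive.
Import Order.TTheory GRing.Theory Num.Theory.
Local Open Scope ring_scope.
Local Open Scope classical_set_scope.

Inductive lform (V : Type) : Type :=
| FVar of V
| FTop
| FBot
| FNeg of lform V
| FAnd of lform V & lform V
| FOr of lform V & lform V
| FImp of lform V & lform V.

Definition IntL (V : finType) := {ffun V -> bool}.

Fixpoint fsat (V : finType) (w : IntL V) (f : lform V) : bool :=
  match f with
  | FVar x => w x
  | FTop => true
  | FBot => false
  | FNeg g => ~~ fsat w g
  | FAnd g h => fsat w g && fsat w h
  | FOr g h => fsat w g || fsat w h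
  | FImp g h => fsat w g ==> fsat w h
  end.

Section Prob.
Variables (R : realType) (V : finType).

Definition is_distr (P : IntL V -> R) : Prop :=
  (forall v, 0 <= P v) /\ \sum_(v : IntL V) P v = 1.

Definition Pf (P : IntL V -> R) (f : lform V) : R :=
  \sum_(v : IntL V | fsat v f) P v.

Definition condP (P : IntL V -> R) (f k : lform V) : R :=
  Pf P (FAnd f k) / Pf P k.

Record constraint := Constraint {
  c_const : R ;
  c_terms : seq (R * lform V) }.

Definition sat_constraint (P : IntL V -> R) (c : constraint) : Prop :=
  0 <= c_const c + \sum_(t <- c_terms c) t.1 * Pf P t.2.

Definition Mod (KR : seq constraint) : set (IntL V -> R) :=
  [set P | is_distr P /\ forall c, List.In c KR -> sat_constraint P c].

(* entropy, with the convention 0 log 0 = 0 (ln 0 = 0 in mathcomp-analysis) *)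
Definition entropy (P : IntL V -> R) : R :=
  - \sum_(v : IntL V) P v * ln (P v).

Definition is_ME (KR : seq constraint) (P : IntL V -> R) : Prop :=
  Mod KR P /\ forall Q, Mod KR Q -> entropy Q <= entropy P.

End Prob.

Inductive concept (NC NR : Type) : Type :=
| CAtom of NC
| CNeg of concept NC NR
| CAnd of concept NC NR & concept NC NR
| CEx of NR & concept NC NR.

Record interp (NC NR : Type) := Interp {
  dom : Type ;
  dom_inhabited : dom ;
  conc_int : NC -> set dom ;
  role_int : NR -> dom -> dom -> Prop }.

Section CSem.
Variables (NC NR : Type) (I : interp NC NR).
Fixpoint csem (C : concept NC NR) : set (dom I) :=
  match C with
  | CAtom A => @conc_int NC NR I A
  | CNeg C' => ~` csem C'
  | CAnd C1 C2 => csem C1 `&` csem C2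
  | CEx r C' => [set x | exists y, @role_int NC NR I r x y /\ csem C' y]
  end.
End CSem.
Arguments csem {NC NR} I C.

(* L-TBox: finite set of L-GCIs <C [= D : kappa> *)
Definition tbox (NC NR : Type) (V : Type) := seq (concept NC NR * concept NC NR * lform V).

Definition models_Tw (NC NR : Type) (V : finType) (T : tbox NC NR V) (w : IntL V)
    (I : interp NC NR) : Prop :=
  forall g, List.In g T -> fsat w g.2 -> csem I g.1.1 `<=` csem I g.1.2.

Definition Tw_entails (NC NR : Type) (V : finType) (T : tbox NC NR V) (w : IntL V)
    (C D : concept NC NR) : Prop :=
  forall I : interp NC NR, models_Tw T w I -> csem I C `<=` csem I D.

Definition strongly_nonsubsumed (NC NR : Type) (V : finType) (T : tbox NC NR V)
    (w : IntL V) (C D : concept NC NR) : Prop :=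
  forall I : interp NC NR, models_Tw T w I -> ~ (csem I C `<=` csem I D).

Definition consequence_formula (NC NR : Type) (V : finType) (T : tbox NC NR V)
    (C D : concept NC NR) (phi : lform V) : Prop :=
  forall w : IntL V, fsat w phi <-> Tw_entails T w C D.

Definition nonsub_consequence_formula (NC NR : Type) (V : finType) (T : tbox NC NR V)
    (C D : concept NC NR) (psi : lform V) : Prop :=
  forall w : IntL V, fsat w psi <-> strongly_nonsubsumed T w C D.

Record world (NC NR : Type) (V : finType) := World {
  w_int : interp NC NR ;
  w_val : IntL V }.

Definition world_models_gci (NC NR : Type) (V : finType) (W : world NC NR V)
    (g : concept NC NR * concept NC NR * lform V) : Prop :=
  ~~ fsat (w_val W) g.2 \/ csem (w_int W) g.1.1 `<=` csem (w_int W) g.1.2.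

(* a nonempty finite set of possible worlds with a probability distribution;
   the finite set is given as the (injective) image of a finite index type *)
Record alcp_interp (R : realType) (NC NR : Type) (V : finType) := ALCP {
  a_idx : finType ;
  a_world : a_idx -> world NC NR V ;
  a_world_inj : injective a_world ;
  a_prob : a_idx -> R ;
  a_prob_ge0 : forall i, 0 <= a_prob i ;
  a_prob_sum1 : \sum_(i : a_idx) a_prob i = 1 }.
Arguments a_world {R NC NR V} a i.
Arguments a_prob {R NC NR V} a i.

Section ALCP.
Variables (R : realType) (NC NR : Type) (V : finType).

Definition induced_distr (P : alcp_interp R NC NR V) (v : IntL V) : R :=
  \sum_(i : a_idx P | w_val (a_world P i) == v) a_prob P i.

(* ME-ALCP-models of K = (KR, T), where PME is P^ME_KR *)
Definition ME_model (PME : IntL V -> R) (T : tbox NC NR V) (P : alcp_interp R NC NR V) : Prop :=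
  (forall (i : a_idx P) g, List.In g T -> world_models_gci (a_world P i) g) /\
  (forall v, induced_distr P v = PME v).

Definition ME_consistent (PME : IntL V -> R) (T : tbox NC NR V) : Prop :=
  exists P, ME_model PME T P.

Definition PrCond (P : alcp_interp R NC NR V) (C D : concept NC NR) (k : lform V) : R :=
  (\sum_(i : a_idx P) (if fsat (w_val (a_world P i)) k &&
        `[< csem (w_int (a_world P i)) C `<=` csem (w_int (a_world P i)) D >]
        then a_prob P i else 0))
  / (\sum_(i : a_idx P | fsat (w_val (a_world P i)) k) a_prob P i).

Definition PrValues (PME : IntL V -> R) (T : tbox NC NR V) (C D : concept NC NR) (k : lform V)
  : set R :=
  [set r | exists P, ME_model PME T P /\ r = PrCond P C D k].

Definition Bs (PME : IntL V -> R) (T : tbox NC NR V) (C D : concept NC NR) (k : lform V) : R :=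
  inf (PrValues PME T C D k).

Definition Bc (PME : IntL V -> R) (T : tbox NC NR V) (C D : concept NC NR) (k : lform V) : R :=
  sup (PrValues PME T C D k).

End ALCP.

(* Main.v *)
Require Import Defs.
From HB Require Import structures.
From mathcomp Require Import all_boot all_order all_algebra.
From mathcomp Require Import classical_sets boolp reals exp.
Import Order.TTheory GRing.Theory Num.Theory.
Local Open Scope ring_scope.

Section Helpers.
Variables (R : realType) (V : finType) (NC NR : Type).

Lemma sum_val (P : alcp_interp R NC NR V) (PME : IntL V -> R)
  (H : forall v, induced_distr P v = PME v) (b : pred (IntL V)) :
  \sum_(i | b (w_val (a_world P i))) a_prob P i = \sum_(v | b v) PME v.
Proof.
rewrite (partition_big (fun i => w_val (a_world P i)) b) //=.
apply: eq_bigr => v bv; rewrite -H /induced_distr.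
apply: eq_bigl => i; case: (w_val _ =P v) => [->|]; by rewrite ?bv ?andbF.
Qed.

Lemma sum_if (P : alcp_interp R NC NR V) (PME : IntL V -> R)
  (H : forall v, induced_distr P v = PME v) (b : pred (IntL V)) :
  \sum_i (if b (w_val (a_world P i)) then a_prob P i else 0) = \sum_(v | b v) PME v.
Proof. by rewrite -big_mkcond (sum_val _ _ H). Qed.

Lemma models_world (T : tbox NC NR V) (W : world NC NR V) :
  (forall g, List.In g T -> world_models_gci W g) -> models_Tw T (w_val W) (w_int W).
Proof.
move=> HW g Hg Hk; case: (HW g Hg) => //; by rewrite Hk.
Qed.

Lemma denom (P : alcp_interp R NC NR V) (PME : IntL V -> R)
  (H : forall v, induced_distr P v = PME v) k :
  \sum_(i | fsat (w_val (a_world P i)) k) a_prob P i = Pf PME k.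
Proof. exact: (sum_val _ _ H (fun v => fsat v k)). Qed.

Lemma build_model (T : tbox NC NR V) (PME : IntL V -> R) (Good : IntL V -> interp NC NR -> Prop) :
  is_distr PME -> ME_consistent PME T ->
  (forall v, (exists I, models_Tw T v I) -> exists I, models_Tw T v I /\ Good v I) ->
  exists P : alcp_interp R NC NR V, ME_model PME T P /\
    forall i, Good (w_val (a_world P i)) (w_int (a_world P i)).
Proof.
move=> [PME0 PME1] [P0 [HP0g HP0d]] HG.
pose S : {pred IntL V} := fun v => [exists i, w_val (a_world P0 i) == v].
have HS0 v : ~~ S v -> PME v = 0.
  move=> nS; rewrite -HP0d /induced_distr big_pred0 // => i.
  apply/negP => /eqP E; move/negP: nS; apply; apply/existsP; exists i; exact/eqP.
have Hex (s : {x in S}) : exists I, models_Tw T (val s) I /\ Good (val s) I.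
  apply: HG; case: s => v /= /existsP [i /eqP <-].
  exists (w_int (a_world P0 i)); apply: models_world => g Hg; exact: HP0g.
have [f Hf] := choice Hex.
pose W (s : {x in S}) := World (f s) (val s).
have Winj : injective W.
  by move=> s1 s2 [_ E]; apply: val_inj.
have Hge0 (s : {x in S}) : 0 <= PME (val s) by [].
have Hsum : \sum_(s : {x in S}) PME (val s) = 1.
  rewrite -big_sub -PME1 [RHS](bigID (fun v => v \in S)) /=.
  rewrite [X in _ = _ + X]big1 ?addr0 // => v; exact: HS0.
exists (@ALCP R NC NR V _ W Winj (fun s => PME (val s)) Hge0 Hsum); split; last first.
  by move=> s /=; case: (Hf s).
split.
  move=> s g Hg /=; rewrite /world_models_gci /=.
  case: (boolP (fsat (val s) g.2)) => Hk; [right|by left].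
  by case: (Hf s) => M _; apply: M.
move=> v; rewrite /induced_distr /=.
case: (boolP (v \in S)) => vS.
  rewrite (big_pred1 (Sub v vS : {x in S})) //=.
rewrite big_pred0 ?HS0 // => s /=; apply/negP => /eqP E.
by move: vS; rewrite -E (valP s).
Qed.

End Helpers.
Arguments sum_if {R V NC NR P PME} H b.
Arguments denom {R V NC NR P PME} H k.
Arguments build_model {R V NC NR T PME Good}.

Theorem theorem5 (R : realType) (V : finType) (NC NR : Type)
    (KR : seq (constraint R V)) (T : tbox NC NR V) (PME : IntL V -> R)
    (C D : concept NC NR) (phi psi kappa : lform V) :
  is_ME KR PME ->
  ME_consistent PME T ->
  consequence_formula T C D phi ->
  nonsub_consequence_formula T C D psi ->
  0 < Pf PME kappa ->
  Bs PME T C D kappa = condP PME phi kappa /\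
  Bc PME T C D kappa = 1 - condP PME psi kappa.
Proof.
move=> [[Hd _] _] Hcons Hphi Hpsi Hk.
have Hk0 : Pf PME kappa != 0 by rewrite gt_eqF.
have sub_of (P : alcp_interp R NC NR V) i : ME_model PME T P ->
    models_Tw T (w_val (a_world P i)) (w_int (a_world P i)).
  by move=> [HP _]; apply: models_world => g Hg; exact: HP.
have lb P : ME_model PME T P -> condP PME phi kappa <= PrCond P C D kappa.
  move=> HM; have HMd := HM.2.
  rewrite /PrCond /condP (denom HMd) ler_pM2r ?invr_gt0 //.
  rewrite /Pf -(sum_if HMd (fun v => fsat v (FAnd phi kappa))).
  apply: ler_sum => i _ /=.
  case: (boolP (fsat _ phi)) => /= Hp; last by case: ifP => // _; apply: a_prob_ge0.
  case: (fsat _ kappa) => //=.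
  rewrite asboolT //; exact: (proj1 (Hphi _) Hp _ (sub_of P i HM)).
have E : 1 - condP PME psi kappa =
    (\sum_(v | fsat v kappa && ~~ fsat v psi) PME v) / Pf PME kappa.
  rewrite /condP; apply: (mulIf Hk0); rewrite mulrBl divfK // mul1r divfK //.
  rewrite /Pf [X in X - _](bigID (fun v => fsat v psi)) /=.
  have -> : \sum_(v | fsat v kappa && fsat v psi) PME v =
     \sum_(v | fsat v (FAnd psi kappa)) PME v by apply: eq_bigl => v /=; rewrite andbC.
  by rewrite addrC addrK.
have ub P : ME_model PME T P -> PrCond P C D kappa <= 1 - condP PME psi kappa.
  move=> HM; have HMd := HM.2.
  rewrite E /PrCond (denom HMd) ler_pM2r ?invr_gt0 //.
  rewrite -(sum_if HMd (fun v => fsat v kappa && ~~ fsat v psi)).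
  apply: ler_sum => i _ /=.
  case: (fsat _ kappa) => //=.
  case: (boolP (fsat _ psi)) => /= Hp; last by case: ifP => // _; apply: a_prob_ge0.
  rewrite asboolF //; exact: (proj1 (Hpsi _) Hp _ (sub_of P i HM)).
have G1 : forall v, (exists I, models_Tw T v I) -> exists I, models_Tw T v I /\
    (~ fsat v phi -> ~ (csem I C `<=` csem I D)%classic).
  move=> v [I HI].
  case: (boolP (fsat v phi)) => Hp; first by exists I; split => //; rewrite Hp.
  have : ~ Tw_entails T v C D by move=> /(proj2 (Hphi v)); rewrite (negbTE Hp).
  move=> /existsNP [I' /not_implyP [HI' HN]]; by exists I'.
have [P1 [HM1 HG1]] := build_model Hd Hcons G1.
have G2 : forall v, (exists I, models_Tw T v I) -> exists I, models_Tw T v I /\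
    (~ fsat v psi -> (csem I C `<=` csem I D)%classic).
  move=> v [I HI].
  case: (boolP (fsat v psi)) => Hp; first by exists I; split => //; rewrite Hp.
  have : ~ strongly_nonsubsumed T v C D by move=> /(proj2 (Hpsi v)); rewrite (negbTE Hp).
  move=> /existsNP [I' /not_implyP [HI' HN]]; exists I'; split => // _.
  exact: contrapT.
have [P2 [HM2 HG2]] := build_model Hd Hcons G2.
have E1 : PrCond P1 C D kappa = condP PME phi kappa.
  rewrite /PrCond /condP (denom HM1.2).
  congr (_ / _); rewrite /Pf -(sum_if HM1.2 (fun v => fsat v (FAnd phi kappa))).
  apply: eq_bigr => i _ /=; case: (fsat _ kappa); rewrite ?andbT ?andbF //=.
  case: (boolP (fsat _ phi)) => Hp.
    by rewrite asboolT //; exact: (proj1 (Hphi _) Hp _ (sub_of P1 i HM1)).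
  by rewrite asboolF //; apply: (HG1 i); apply/negP.
have E2 : PrCond P2 C D kappa = 1 - condP PME psi kappa.
  rewrite E /PrCond (denom HM2.2).
  congr (_ / _); rewrite -(sum_if HM2.2 (fun v => fsat v kappa && ~~ fsat v psi)).
  apply: eq_bigr => i _ /=; case: (fsat _ kappa) => //=.
  case: (boolP (fsat _ psi)) => Hp /=.
    by rewrite asboolF //; exact: (proj1 (Hpsi _) Hp _ (sub_of P2 i HM2)).
  by rewrite asboolT //; apply: (HG2 i); apply/negP.
split.
  apply/eqP; rewrite eq_le; apply/andP; split.
    apply: ge_inf; first by exists (condP PME phi kappa) => r [P [HP ->]]; exact: lb.
    by exists P1.
  apply: lb_le_inf; first by exists (PrCond P1 C D kappa), P1.
  by move=> r [P [HP ->]]; exact: lb.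
apply/eqP; rewrite eq_le; apply/andP; split.
  apply: ge_sup; first by exists (PrCond P1 C D kappa), P1.
  by move=> r [P [HP ->]]; exact: ub.
rewrite -E2; apply: ub_le_sup; last by exists P2.
by exists (1 - condP PME psi kappa) => r [P [HP ->]]; exact: ub.
Qed.
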